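(* Let $G$, $\delta$, $l$ satisfy: $G$ torsion-free, $l:G\to\mathbb{Z}^n$ a $\delta$-regular $\delta$-hyperbolic length function with (A) $ht(\delta)=1$, (B) for all $g\in G$ and nonzero integers $m$, $l(g^m)<l(g)$ implies $ht(l(g)-l(g^m))=1$, (C) $l(g)>0$ for $g\ne1$. Then for every $k\ge1$ the length function $l_k:G\to\mathbb{Z}^{n-k}$ is $0$-hyperbolic, $0$-regular, and satisfies $l_k(g^2)\ge l_k(g)$ for all $g\in G$.
   Context: $\mathbb{Z}^m$ (and $\mathbb{Q}^m$) carries the right lexicographic order: $(a_1,\dots,a_m)<(b_1,\dots,b_m)$ iff $a_j<b_j$ for the largest $j$ with $a_j\ne b_j$. $ht(a)$ is the largest index $k$ with $a_k\ne0$, $ht(0)=0$. A length function $L:G\to\mathbb{Z}^m$ satisfies $L(1)=0$, $L(g)\ge0$, $L(g^{-1})=L(g)$, $L(gh)\le L(g)+L(h)$; $c_L(g,h)=\tfrac12(L(g)+L(h)-L(g^{-1}h))$. $L$ is $\delta$-hyperbolic if $c_L(f,g)\ge\min\{c_L(f,h),c_L(g,h)\}-\delta$ for all $f,g,h$. $g=a\circ b$ means $g=ab$ and $L(g)=L(a)+L(b)$; $L$ is $\delta$-regular if for all $g,h$ there exist $g_c,h_c,g_d,h_d$ with $L(g_c)=L(h_c)=c_L(g,h)$, $g=g_c\circ g_d$, $h=h_c\circ h_d$, $L(g_c^{-1}h_c)\le4\delta$. For $k\ge1$, $l_k(g)=(a_{k+1},\dots,a_n)$ where $l(g)=(a_1,\dots,a_n)$.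 *)

(* Defs.v *)
(* Vectors in Z^m / Q^m are row
   vectors 'rV[int]_m / 'rV[rat]_m; coordinate a_j (1-based) is [a ord0 j'] with
   j' = j-1 (0-based ordinal). *)
From HB Require Import structures.
From mathcomp Require Import all_boot all_order all_algebra.

Set Implicit Arguments.
Unset Strict Implicit.
Unset Printing Implicit Defensive.

Import Order.TTheory GRing.Theory Num.Theory.
Local Open Scope ring_scope.

Section Lex.
Variables (R : realDomainType) (m : nat).
Implicit Types a b : 'rV[R]_m.

Definition lexlt a b : bool :=
  [exists j : 'I_m, (a ord0 j < b ord0 j) &&
     [forall i : 'I_m, (j < i)%N ==> (a ord0 i == b ord0 i)]].
Definition lexle a b : bool := (a == b) || lexlt a b.
Definition lexmin a b : 'rV[R]_m := if lexle a b then a else b.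

Definition ht a : nat := (\max_(i < m | a ord0 i != 0%R) i.+1)%N.
End Lex.

Definition toQ m (v : 'rV[int]_m) : 'rV[rat]_m := map_mx (fun z : int => z%:~R) v.

Section LengthFunctions.
Variables (G : groupType) (m : nat) (L : G -> 'rV[int]_m).

Definition is_length_function : Prop :=
  [/\ L 1%g = 0,
      forall g, lexle 0 (L g),
      forall g, L (g^-1)%g = L g &
      forall g h, lexle (L (g * h)%g) (L g + L h)].

Definition cL (g h : G) : 'rV[rat]_m :=
  (1/2 : rat) *: (toQ (L g) + toQ (L h) - toQ (L (g^-1 * h)%g)).

Definition hyperbolic (delta : 'rV[int]_m) : Prop :=
  forall f g h, lexle (lexmin (cL f h) (cL g h) - toQ delta) (cL f g).

Definition lcomp (g a b : G) : Prop := g = (a * b)%g /\ L g = L a + L b.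

Definition regular (delta : 'rV[int]_m) : Prop :=
  forall g h, exists gc hc gd hd : G,
    [/\ toQ (L gc) = cL g h, toQ (L hc) = cL g h,
        lcomp g gc gd, lcomp h hc hd &
        lexle (L (gc^-1 * hc)%g) (delta *+ 4)].
End LengthFunctions.

Definition zexpg (G : groupType) (g : G) (z : int) : G :=
  match z with
  | Posz n => (g ^+ n)%g
  | Negz n => ((g ^+ n.+1)^-1)%g
  end.

Definition torsion_free (G : groupType) : Prop :=
  forall (g : G) (n : nat), (0 < n)%N -> (g ^+ n)%g = 1%g -> g = 1%g.

(* j-th (0-based) entry of v, 0 if out of range *)
Definition ventry m (v : 'rV[int]_m) (j : nat) : int :=
  match insub j : option 'I_m with Some j' => v ord0 j' | None => 0 end.

(* l_k(g) = (a_{k+1}, ..., a_n) where l(g) = (a_1, ..., a_n) *)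
Definition lk (G : groupType) n (k : nat) (l : G -> 'rV[int]_n) (g : G)
  : 'rV[int]_(n - k) :=
  \row_(i < n - k) ventry (l g) (i + k).

(* Main.v *)
Require Import Defs.
From HB Require Import structures.
From mathcomp Require Import all_boot all_order all_algebra.
From mathcomp Require Import zify.
Import Order.TTheory GRing.Theory Num.Theory.
Local Open Scope ring_scope.

Section Lex2.
Variables (R : realDomainType) (m : nat).
Implicit Types a b : 'rV[R]_m.

Lemma lexlt_wit a b : lexlt a b ->
  exists j : 'I_m, a ord0 j < b ord0 j /\ forall i : 'I_m, (j < i)%N -> a ord0 i = b ord0 i.
Proof.
case/existsP => j /andP [lt /forallP H]; exists j; split => // i ji.
by move/implyP: (H i) => /(_ ji) /eqP.
Qed.

Lemma lex_total a b : lexle a b || lexle b a.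
Proof.
case: (eqVneq a b) => [->|neq]; first by rewrite /lexle eqxx.
have [i0 Hi0] : exists i, a ord0 i != b ord0 i.
  apply/existsP; apply: contraNT neq => /existsPn H; apply/eqP/rowP => i.
  have -> : (0 : 'I_1) = ord0 by apply: val_inj.
  by move: (H i); rewrite negbK => /eqP.
case: (@arg_maxnP _ i0 (fun i => a ord0 i != b ord0 i) val Hi0) => j Hj Hmax.
have Heq : forall i : 'I_m, (j < i)%N -> a ord0 i == b ord0 i.
  move=> i ji; apply: contraTT ji => nz; rewrite -leqNgt; exact: Hmax.
case/orP: (lt_total Hj) => lt.
  apply/orP; left; apply/orP; right; apply/existsP; exists j; rewrite lt /=.
  by apply/forallP => i; apply/implyP => /Heq.
apply/orP; right; apply/orP; right; apply/existsP; exists j; rewrite lt /=.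
by apply/forallP => i; apply/implyP => /Heq; rewrite eq_sym.
Qed.

Lemma lex_antisym a b : lexle a b -> lexle b a -> a = b.
Proof.
case/orP => [/eqP -> //|H1]; case/orP => [/eqP -> //|H2].
move: H1 H2 => /lexlt_wit [j1 [l1 E1]] /lexlt_wit [j2 [l2 E2]].
case: (ltngtP j1 j2) => c.
- by move: l2; rewrite E1 // ltxx.
- by move: l1; rewrite E2 // ltxx.
- have e : j1 = j2 by apply: val_inj.
  by subst; move: (lt_trans l1 l2); rewrite ltxx.
Qed.

End Lex2.

Section Pr.
Variables (R : realDomainType) (m k : nat).
Implicit Types a b : 'rV[R]_m.

Definition ventryR (v : 'rV[R]_m) (j : nat) : R :=
  match insub j : option 'I_m with Some j' => v ord0 j' | None => 0 end.

Definition pr (v : 'rV[R]_m) : 'rV[R]_(m - k) := \row_(i < m - k) ventryR v (i + k).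

Lemma ltn_prk (i : 'I_(m - k)) : (i + k < m)%N.
Proof. have := ltn_ord i; lia. Qed.

Lemma pr_entry v i : pr v ord0 i = v ord0 (Ordinal (ltn_prk i)).
Proof.
rewrite mxE /ventryR; case: insubP => [j _ hj|].
  by congr (v ord0 _); apply: val_inj.
by rewrite ltn_prk.
Qed.

Lemma pr_mono a b : lexle a b -> lexle (pr a) (pr b).
Proof.
case/orP => [/eqP -> | /lexlt_wit [j [lt H]]]; first by rewrite /lexle eqxx.
case: (leqP k j) => kj.
  have hj : (j - k < m - k)%N by have := ltn_ord j; lia.
  apply/orP; right; apply/existsP; exists (Ordinal hj); apply/andP; split.
    rewrite !pr_entry; have -> : Ordinal (ltn_prk (Ordinal hj)) = j
      by apply: val_inj => /=; lia.
    done.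
  apply/forallP => i; apply/implyP => /= ji; rewrite !pr_entry; apply/eqP.
  by apply: H => /=; lia.
apply/orP; left; apply/eqP/rowP => i.
have -> : (0 : 'I_1) = ord0 by apply: val_inj.
by rewrite !pr_entry; apply: H => /=; lia.
Qed.

Lemma pr_lexmin a b : pr (lexmin a b) = lexmin (pr a) (pr b).
Proof.
rewrite /lexmin; case: ifP => H.
  by rewrite (pr_mono _ _ H).
have : lexle b a by move: (@lex_total R m a b); rewrite H.
move=> /(pr_mono _ _) H'; case: ifP => // H2; exact: lex_antisym.
Qed.

Lemma prD a b : pr (a + b) = pr a + pr b.
Proof.
apply/rowP => i; rewrite [RHS]mxE !pr_entry; by rewrite mxE.
Qed.

Lemma prN a : pr (- a) = - pr a.
Proof. apply/rowP => i; rewrite [RHS]mxE !pr_entry; by rewrite mxE. Qed.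

Lemma prB a b : pr (a - b) = pr a - pr b.
Proof. by rewrite prD prN. Qed.

Lemma prZ c a : pr (c *: a) = c *: pr a.
Proof. apply/rowP => i; rewrite [RHS]mxE !pr_entry; by rewrite mxE. Qed.

Lemma pr0 : pr 0 = 0.
Proof. apply/rowP => i; rewrite [RHS]mxE !pr_entry; by rewrite mxE. Qed.

Lemma prMn a n : pr (a *+ n) = pr a *+ n.
Proof. elim: n => [|n IH]; first by rewrite !mulr0n pr0. by rewrite !mulrS prD IH. Qed.

Lemma ht_zero a : ht a = 1%N -> forall i : 'I_m, (0 < i)%N -> a ord0 i = 0.
Proof.
move=> H i i0; apply/eqP; apply: contraTT i0 => nz.
have := @leq_bigmax_cond _ (fun j : 'I_m => a ord0 j != 0) (fun j : 'I_m => j.+1) i nz.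
rewrite /ht in H; rewrite H; lia.
Qed.

Lemma pr_ht1 a : ht a = 1%N -> (1 <= k)%N -> pr a = 0.
Proof.
move=> H k1; apply/rowP => i; rewrite [RHS]mxE pr_entry; apply: ht_zero => //=; lia.
Qed.

End Pr.
Arguments pr {R m} k v.

Lemma lk_pr (G : groupType) n k (l : G -> 'rV[int]_n) g : lk k l g = pr k (l g).
Proof. by apply/rowP => i; rewrite !mxE. Qed.

Lemma toQ_pr n k (v : 'rV[int]_n) : toQ (pr k v) = pr k (toQ v).
Proof.
apply/rowP => i; have -> : (0 : 'I_1) = ord0 by apply: val_inj.
by rewrite /toQ [LHS]mxE !pr_entry mxE.
Qed.

Lemma toQ0 n : toQ (0 : 'rV[int]_n) = 0.
Proof. by apply/rowP => i; rewrite /toQ !mxE. Qed.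

Lemma cL_pr (G : groupType) n k (l : G -> 'rV[int]_n) g h :
  cL (lk k l) g h = pr k (cL l g h).
Proof. by rewrite /cL !lk_pr !toQ_pr -prD -prB -prZ. Qed.

Lemma lexle_refl (R : realDomainType) m (a : 'rV[R]_m) : lexle a a.
Proof. by rewrite /lexle eqxx. Qed.

Theorem lemma3p3 (G : groupType) (n : nat) (l : G -> 'rV[int]_n)
    (delta : 'rV[int]_n) :
  torsion_free G ->
  is_length_function l ->
  hyperbolic l delta ->
  regular l delta ->
  ht delta = 1%N ->
  (forall (g : G) (z : int), z != 0 ->
     lexlt (l (zexpg g z)) (l g) -> ht (l g - l (zexpg g z)) = 1%N) ->
  (forall g : G, g != 1%g -> lexlt 0 (l g)) ->
  forall k : nat, (1 <= k)%N ->
    [/\ is_length_function (lk k l),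
        hyperbolic (lk k l) 0,
        regular (lk k l) 0 &
        forall g : G, lexle (lk k l g) (lk k l (g ^+ 2)%g)].
Proof.
move=> _ [L1 L0 Linv Lsub] Hhyp Hreg Hd Hpow _ k k1.
have pd : pr k delta = 0 by apply: pr_ht1.
have HL : is_length_function (lk k l).
  split.
  - by rewrite lk_pr L1 pr0.
  - by move=> g; rewrite lk_pr -(pr0 _ _ k); apply: pr_mono.
  - by move=> g; rewrite !lk_pr Linv.
  - by move=> g h; rewrite !lk_pr -prD; apply: pr_mono.
split => //.
- move=> f g h; rewrite !cL_pr toQ0 subr0 -pr_lexmin.
  have := pr_mono _ _ k _ _ (Hhyp f g h).
  by rewrite prB -toQ_pr pd toQ0 subr0.
- move=> g h; have [gc [hc [gd [hd [E1 E2 [Eg Lg] [Eh Lh] Hle]]]]] := Hreg g h.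
  exists gc, hc, gd, hd; split.
  + by rewrite cL_pr lk_pr toQ_pr E1.
  + by rewrite cL_pr lk_pr toQ_pr E2.
  + by split => //; rewrite !lk_pr Lg prD.
  + by split => //; rewrite !lk_pr Lh prD.
  + rewrite mul0rn.
    have -> : lk k l (gc^-1 * hc)%g = 0.
      apply: lex_antisym; last by case: HL => _ H _ _; apply: H.
      rewrite lk_pr; have := pr_mono _ _ k _ _ Hle.
      by rewrite prMn pd mul0rn.
    exact: lexle_refl.
- move=> g; case: (boolP (lexlt (l (g ^+ 2)%g) (l g))) => H.
    have z2 : (2%:Z : int) != 0 by [].
    have H' : lexlt (l (zexpg g 2%:Z)) (l g) by [].
    have := Hpow g 2%:Z z2 H' => /pr_ht1 /(_ k1).
    rewrite prB => /eqP; rewrite subr_eq0 => /eqP E.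
    by rewrite !lk_pr E lexle_refl.
  rewrite !lk_pr; apply: pr_mono.
  case/orP: (lex_total _ _ (l g) (l (g ^+ 2)%g)) => // /orP [/eqP -> | H2].
    exact: lexle_refl.
  by rewrite H2 in H.
Qed.
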